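(* Let $G$ be a finite group with pairwise non-isomorphic irreducible complex representations $(V_1,\rho_1),\dots,(V_k,\rho_k)$, let $X$ be a $G$-homogeneous space (finite set with transitive $G$-action), let $Q$ be a probability distribution on $G$ and $q:=\sum_{g\in G}Q(g)e_g\in\mathbb{C}G$. Then for every positive integer $N$ there exist $r,s\in X$ such that \[\|q^N\cdot e_{r}-\overline{u}\|_{\rm TV}^2\leq \frac{1}{4}\sum_{V_j\neq {\rm triv}} m(V_j, \mathbb{C} X) \|\hat{Q}(\rho_j)^N\|_{\rm Fb}^2\] and \[\|q^N\cdot e_{s}-\overline{u}\|_{\rm TV}^2\geq \frac{1}{4|X|}\sum_{V_j\neq {\rm triv}} m(V_j, \mathbb{C} X) \|\hat{Q}(\rho_j)^N\|_{\rm Fb}^2,\] the sums running over the nontrivial irreducible representations.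
   Context: $\mathbb{C}G$ is the group algebra with basis $\{e_g\}$ and product $e_ge_h=e_{gh}$; $q^N$ is the $N$-th power in $\mathbb{C}G$. $\mathbb{C}X$ has basis $\{e_x:x\in X\}$ and is a $\mathbb{C}G$-module via $e_g\cdot e_x:=e_{g(x)}$. For $h=\sum_x h(x)e_x$, $\|h\|_{\rm TV}:=\frac12\sum_x|h(x)|$; $\overline{u}:=\frac{1}{|X|}\sum_x e_x$. $m(V_j,\mathbb{C}X)$ is the multiplicity of $V_j$ in $\mathbb{C}X$. With a fixed orthonormal basis $B_j$ of $V_j$ for a $G$-invariant inner product, $\hat{Q}(\rho_j):=\sum_g Q(g)[\rho_j(g)]_{B_j}$, and $\|A\|_{\rm Fb}^2:={\rm Tr}(AA^* )$. *)

(* Defs.v *)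
From HB Require Import structures.
From mathcomp Require Import all_boot all_order all_fingroup all_algebra all_solvable all_field all_character.
From Stdlib Require Import ClassicalEpsilon.
Set Implicit Arguments. Unset Strict Implicit. Unset Printing Implicit Defensive.
Import Order.TTheory GRing.Theory Num.Theory.
Local Open Scope ring_scope.

Record lact (gT : finGroupType) (X : finType) := Lact {
  lact_fun :> gT -> X -> X;
  lact1 : forall x, lact_fun 1%g x = x;
  lactM : forall g h x, lact_fun (g * h)%g x = lact_fun g (lact_fun h x) }.

Definition lact_transitive (gT : finGroupType) (X : finType) (A : lact gT X) :=
  forall x y : X, exists g : gT, A g x = y.

(* The group algebra CG, elements = coefficient functions g |-> a(g) *)
Definition ga_one (gT : finGroupType) : gT -> algC := fun g => (g == 1%g)%:R.
Definition ga_mul (gT : finGroupType) (a b : gT -> algC) : gT -> algC :=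
  fun k => \sum_(g : gT) \sum_(h : gT) (a g * b h) *+ ((g * h)%g == k).
Fixpoint ga_pow (gT : finGroupType) (a : gT -> algC) (N : nat) : gT -> algC :=
  match N with 0 => @ga_one gT | N'.+1 => ga_mul (ga_pow a N') a end.

(* the CG-module CX: e_g . e_x = e_{g(x)} *)
Definition cx_basis (X : finType) (x : X) : X -> algC := fun y => (y == x)%:R.
Definition ga_act (gT : finGroupType) (X : finType) (A : lact gT X)
  (a : gT -> algC) (h : X -> algC) : X -> algC :=
  fun y => \sum_(g : gT) \sum_(x : X) (a g * h x) *+ (A g x == y).
Definition cx_unif (X : finType) : X -> algC := fun _ => (#|X|%:R)^-1.
Definition cx_sub (X : finType) (h1 h2 : X -> algC) : X -> algC := fun x => h1 x - h2 x.
Definition tv_norm (X : finType) (h : X -> algC) : algC := 2^-1 * \sum_(x : X) `|h x|.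

(* permutation representation of G on CX, in the basis (e_x), x = enum_val i *)
Definition perm_mx (gT : finGroupType) (X : finType) (A : lact gT X) (g : gT)
  : 'M[algC]_#|X| :=
  \matrix_(i, j) (A g (enum_val j) == enum_val i)%:R.

Lemma perm_mx_repr (gT : finGroupType) (X : finType) (A : lact gT X) :
  mx_repr [set: gT] (perm_mx A).
Proof.
split.
  apply/matrixP=> i j; rewrite !mxE lact1 (inj_eq enum_val_inj) eq_sym //.
move=> g h _ _; apply/matrixP=> i j; rewrite !mxE lactM.
rewrite (bigD1 (enum_rank (A h (enum_val j)))) //= big1 ?addr0.
  by rewrite !mxE enum_rankK eqxx mulr1.
move=> k /negbTE nk; rewrite !mxE.
have [e|ne] := eqVneq (A h (enum_val j)) (enum_val k); last by rewrite mulr0.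
by move: nk; rewrite e enum_valK eqxx.
Qed.

Definition perm_repr (gT : finGroupType) (X : finType) (A : lact gT X)
  : mx_representation algC [set: gT]%G #|X| := MxRepresentation (perm_mx_repr A).

Lemma triv_mx_repr (gT : finGroupType) :
  mx_repr [set: gT] (fun _ : gT => (1%:M : 'M[algC]_1)).
Proof. by split=> // g h _ _; rewrite mul1mx. Qed.
Definition triv_repr (gT : finGroupType) : mx_representation algC [set: gT]%G 1 :=
  MxRepresentation (triv_mx_repr gT).

Definition is_triv (gT : finGroupType) n (r : mx_representation algC [set: gT]%G n)
  : bool := if excluded_middle_informative (mx_rsim r (triv_repr gT)) then true else false.

(* multiplicity m(V, W) of the irreducible rV in rW: the multiplicity
   (socle_mult) of the rW-component (isotypic component) whose simple
   modules are isomorphic to rV, 0 if there is none *)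
Definition mult (gT : finGroupType) n (rV : mx_representation algC [set: gT]%G n)
  m (rW : mx_representation algC [set: gT]%G m) : nat :=
  let sW := DecSocleType rW in
  (\sum_(W : sW)
     if excluded_middle_informative (mx_rsim (socle_repr W) rV)
     then socle_mult W else 0)%N.

(* unitary representation = matrices in an orthonormal basis of a G-invariant
   inner product *)
Definition conjT n (M : 'M[algC]_n) : 'M[algC]_n := (map_mx Num.conj M)^T.
Definition unitary_repr (gT : finGroupType) n (r : mx_representation algC [set: gT]%G n) :=
  forall g : gT, r g *m conjT (r g) = 1%:M.

Definition fourier (gT : finGroupType) n (Q : gT -> algC)
  (r : mx_representation algC [set: gT]%G n) : 'M[algC]_n := \sum_(g : gT) Q g *: r g.
Definition frob2 n (M : 'M[algC]_n) : algC := \tr (M *m conjT M).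

(* Main.v *)
Require Import Defs.
From HB Require Import structures.
From mathcomp Require Import all_boot all_order all_fingroup all_algebra all_solvable all_field all_character.
From mathcomp Require Import ring.
From Stdlib Require Import ClassicalEpsilon.
Import Order.TTheory GRing.Theory Num.Theory.
Local Open Scope ring_scope.

Lemma socle_cfRepr (gT : finGroupType) (G : {group gT}) n (rG : mx_representation algC G n) :
  let sG := DecSocleType rG in
  cfRepr rG = \sum_(W : sG) cfRepr (socle_repr W) *+ socle_mult W.
Proof.
move=> sG.
have C'G := algC'G_pchar G.
have defS : ((\sum_(W : sG) socle_val W)%MS :=: 1%:M)%MS.
  have <-: Socle sG = 1%:M := reducible_Socle1 sG (mx_Maschke_pchar rG C'G).
  by [].
have dxS : mxdirect (\sum_(W : sG) socle_val W)%MS by exact: Socle_direct.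
pose modW (W : sG) : mxmodule rG W := component_mx_module rG (socle_base W).
have rs : mx_rsim rG (\big[dadd_grepr/grepr0]_(W : sG)
     muln_grepr (Representation (socle_repr W)) (socle_mult W)).
  apply: mx_rsim_trans (mx_rsim_sym (rsim_submod1 (mxmodule1 rG) _)) _ => //.
  apply: (@mx_rsim_dsum _ _ _ _ _ _ _ _ _ _ modW (mxmodule1 rG) defS dxS) => W.
  apply: mx_rsim_socle; exact: mx_rsim_refl.
rewrite (cfRepr_sim rs) cfRepr_dsum; apply: eq_bigr => W _.
by rewrite cfRepr_muln.
Qed.


Lemma is_trivP (gT : finGroupType) n (r : mx_representation algC [set: gT]%G n) :
  is_triv r <-> mx_rsim r (triv_repr gT).
Proof. by rewrite /is_triv; case: excluded_middle_informative. Qed.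

Lemma cfRepr_triv (gT : finGroupType) : cfRepr (triv_repr gT) = 1.
Proof.
apply/cfun_inP=> x Gx; rewrite cfunE cfun1E Gx /= mxtrace1 //.
Qed.

Lemma sum_tr_irr (gT : finGroupType) n (r : mx_representation algC [set: gT]%G n) :
  mx_irreducible r ->
  \sum_(g : gT) \tr (r g) = if is_triv r then #|gT|%:R else 0.
Proof.
move=> irr_r.
have trE g : \tr (r g) = cfRepr r g by rewrite cfunE inE mulr1n.
case: ifP => [/is_trivP rs | /negbT nt].
  rewrite (eq_bigr (fun _ => 1)) ?sumr_const // => g _.
  by rewrite trE (cfRepr_sim rs) cfRepr_triv cfun1E inE.
have ne1 : cfRepr r != 1.
  apply/negP => /eqP e; move/negP: nt; apply; apply/is_trivP.
  by apply: cfRepr_inj; rewrite e cfRepr_triv.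
have /irrP [i ei] : cfRepr r \in irr [set: gT]%G.
  by apply/irr_reprP; exists (Representation r).
have i0 : i != 0 by apply: contraNneq ne1 => i0; rewrite ei i0 irr0.
have := cfdot_irr i 0; rewrite (negbTE i0) irr0 cfdotE -ei => /eqP.
rewrite mulf_eq0 invr_eq0 pnatr_eq0 -[(#|_| == 0%N)]negbK -lt0n cardG_gt0 /= => /eqP s0.
rewrite -[RHS]s0; apply: eq_big => [g|g _]; first by rewrite inE.
by rewrite trE cfun1E inE conjC1 mulr1.
Qed.


Lemma ga_mul_sum (gT : finGroupType) (a b : gT -> algC) :
  \sum_k ga_mul a b k = (\sum_g a g) * (\sum_h b h).
Proof.
rewrite /ga_mul exchange_big /= mulr_suml; apply: eq_bigr => g _.
rewrite exchange_big mulr_sumr /=; apply: eq_bigr => h _.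
by rewrite (bigD1 (g * h)%g) //= eqxx big1 ?addr0 // => k /negbTE; rewrite eq_sym => ->.
Qed.

Lemma ga_one_sum (gT : finGroupType) : \sum_(g : gT) @ga_one gT g = 1.
Proof.
by rewrite (bigD1 1%g) //= /ga_one eqxx big1 ?addr0 // => g /negbTE ->.
Qed.

Lemma ga_pow_sum (gT : finGroupType) (Q : gT -> algC) N :
  \sum_g Q g = 1 -> \sum_g ga_pow Q N g = 1.
Proof.
move=> sQ; elim: N => [|N IH] /=; first exact: ga_one_sum.
by rewrite ga_mul_sum IH sQ mulr1.
Qed.

Lemma prod_sums (gT : finGroupType) n (a b : gT -> algC)
  (r : mx_representation algC [set: gT]%G n) :
  (\sum_g a g *: r g) *m (\sum_h b h *: r h) = \sum_g \sum_h (a g * b h) *: r (g * h)%g.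
Proof.
rewrite mulmx_suml; apply: eq_bigr => g _.
rewrite mulmx_sumr; apply: eq_bigr => h _.
by rewrite -scalemxAl -scalemxAr scalerA -repr_mxM ?inE.
Qed.

Lemma fourier_pow (gT : finGroupType) n (Q : gT -> algC)
  (r : mx_representation algC [set: gT]%G n) N :
  fourier Q r ^+ N = \sum_g ga_pow Q N g *: r g.
Proof.
elim: N => [|N IH].
  rewrite expr0 /= (bigD1 1%g) //= /ga_one eqxx scale1r big1 ?addr0.
    by rewrite repr_mx1.
  by move=> g /negbTE ->; rewrite scale0r.
rewrite exprSr IH /fourier /= -mulmxE prod_sums.
under [RHS]eq_bigr do rewrite /ga_mul scaler_suml.
rewrite [RHS]exchange_big /=; apply: eq_bigr => g _.
under [RHS]eq_bigr do rewrite scaler_suml.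
rewrite [RHS]exchange_big /=; apply: eq_bigr => h _.
rewrite (bigD1 (g * h)%g) //= eqxx big1 ?addr0 //.
by move=> k /negbTE; rewrite eq_sym => ->; rewrite scale0r.
Qed.

Definition conjT' := conjT.

Lemma conjT_sum (gT : finGroupType) n (c : gT -> algC) (M : gT -> 'M[algC]_n) :
  conjT (\sum_g c g *: M g) = \sum_g (c g)^* *: conjT (M g).
Proof.
apply/matrixP => i j; rewrite !mxE summxE rmorph_sum summxE.
by apply: eq_bigr => g _; rewrite !mxE rmorphM.
Qed.

Lemma unitary_conj (gT : finGroupType) n (r : mx_representation algC [set: gT]%G n) :
  unitary_repr r -> forall g, conjT (r g) = r (g^-1)%g.
Proof.
move=> u g.
have := congr1 (mulmx (r g^-1)%g) (u g).
by rewrite mulmx1 mulmxA -repr_mxM ?inE // mulVg repr_mx1 mul1mx.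
Qed.

Lemma frob_formula (gT : finGroupType) n (r : mx_representation algC [set: gT]%G n)
  (c : gT -> algC) : unitary_repr r ->
  frob2 (\sum_g c g *: r g) =
  \sum_g \sum_h c g * (c h)^* * \tr (r (h^-1 * g)%g).
Proof.
move=> u; rewrite /frob2 conjT_sum mulmx_suml linear_sum /=.
apply: eq_bigr => g _; rewrite mulmx_sumr linear_sum /=.
apply: eq_bigr => h _.
rewrite unitary_conj // -scalemxAl -scalemxAr !linearZ /= mulrA.
by rewrite mxtrace_mulC -repr_mxM ?inE.
Qed.


Lemma ga_act_basis (gT : finGroupType) (X : finType) (A : lact gT X) R r y :
  ga_act A R (cx_basis r) y = \sum_g R g * (A g r == y)%:R.
Proof.
apply: eq_bigr => g _; rewrite (bigD1 r) //= /cx_basis eqxx mulr1 big1 ?addr0.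
  by rewrite mulr_natr.
by move=> x /negbTE ->; rewrite mulr0 mul0rn.
Qed.

Lemma perm_tr (gT : finGroupType) (X : finType) (A : lact gT X) k :
  \tr (perm_repr A k) = \sum_(x : X) (A k x == x)%:R.
Proof.
rewrite /mxtrace (big_enum_val (fun x : X => (A k x == x)%:R)) /=.
apply: eq_big => [i|i _] //; by rewrite mxE.
Qed.

Lemma lactVK (gT : finGroupType) (X : finType) (A : lact gT X) g x :
  A (g^-1)%g (A g x) = x.
Proof. by rewrite -lactM mulVg lact1. Qed.

Lemma lact_eq (gT : finGroupType) (X : finType) (A : lact gT X) g h x :
  (A g x == A h x) = (A (h^-1 * g)%g x == x).
Proof.
apply/eqP/eqP => e; first by rewrite lactM e lactVK.
by rewrite -[in RHS]e -lactM mulgA mulgV mul1g.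
Qed.

Lemma sum_sq_P (gT : finGroupType) (X : finType) (A : lact gT X) (R : gT -> algC) :
  \sum_r \sum_y ga_act A R (cx_basis r) y * (ga_act A R (cx_basis r) y)^* =
  \sum_g \sum_h R g * (R h)^* * \sum_(x : X) (A (h^-1 * g)%g x == x)%:R.
Proof.
under eq_bigr => r _ do under eq_bigr => y _ do
  rewrite !ga_act_basis rmorph_sum mulr_suml.
under eq_bigr => r _ do rewrite exchange_big /=.
rewrite exchange_big /=; apply: eq_bigr => g _.
under eq_bigr => r _ do under eq_bigr => y _ do rewrite mulr_sumr.
under eq_bigr => r _ do rewrite exchange_big /=.
rewrite exchange_big /=; apply: eq_bigr => h _.
rewrite mulr_sumr; apply: eq_bigr => x _.
rewrite (bigD1 (A g x)) //= big1 ?addr0.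
  rewrite eqxx rmorphM /= conjC_nat eq_sym lact_eq.
  by case: (_ == _); rewrite ?mulr1 ?mulr0.
by move=> y /negbTE; rewrite eq_sym => ->; rewrite mulr0 mul0r.
Qed.

Lemma burnside (gT : finGroupType) (X : finType) (A : lact gT X) :
  (0 < #|X|)%N -> lact_transitive A ->
  \sum_(k : gT) \sum_(x : X) ((A k x == x)%:R : algC) = #|gT|%:R.
Proof.
move=> X0 tr.
have stab x : #|X|%:R * \sum_(k : gT) ((A k x == x)%:R : algC) = #|gT|%:R.
  have -> : (#|gT|%:R : algC) = \sum_(y : X) \sum_(k : gT) (A k x == y)%:R.
    rewrite exchange_big /= -sum1_card natr_sum; apply: eq_bigr => k _.
    by rewrite (bigD1 (A k x)) //= eqxx big1 ?addr0 // => y /negbTE; rewrite eq_sym => ->.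
  rewrite mulr_natl -sumr_const; apply: eq_bigr => y _.
  have [g0 eg0] := tr x y.
  rewrite [RHS](reindex_inj (mulgI g0)) /=; apply: eq_bigr => k _.
  by rewrite lactM -eg0 (inj_eq (can_inj (@lactVK _ _ A g0))).
have nX : (#|X|%:R : algC) != 0.
  by rewrite pnatr_eq0 -lt0n.
rewrite exchange_big /=.
rewrite (eq_bigr (fun _ => #|gT|%:R / #|X|%:R)) => [|x _]; last first.
  by rewrite -(stab x) mulrC mulKf.
have -> : \sum_(x : X) (#|gT|%:R / #|X|%:R : algC) = #|X|%:R * (#|gT|%:R / #|X|%:R) by rewrite sumr_const [RHS]mulr_natl.
by rewrite mulrC mulfVK.
Qed.


Lemma sum_const_X (X : finType) (c : algC) : \sum_(x : X) c = #|X|%:R * c.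
Proof. by rewrite sumr_const [RHS]mulr_natl. Qed.

Lemma cs_ineq (X : finType) (u : X -> algC) : (forall y, 0 <= u y) ->
  (\sum_y u y) ^+ 2 <= #|X|%:R * \sum_y u y ^+ 2.
Proof.
move=> u0.
have D0 : 0 <= \sum_y \sum_z (u y - u z) ^+ 2.
  apply: sumr_ge0 => y _; apply: sumr_ge0 => z _.
  by rewrite -realEsqr; apply: realB; apply: ger0_real.
have e1 : \sum_(y : X) \sum_(z : X) u y ^+ 2 = #|X|%:R * \sum_y u y ^+ 2.
  by rewrite mulr_sumr; apply: eq_bigr => y _; rewrite sum_const_X.
have e2 : \sum_(y : X) \sum_(z : X) u z ^+ 2 = #|X|%:R * \sum_y u y ^+ 2.
  by rewrite sum_const_X.
have e3 : \sum_(y : X) \sum_(z : X) u y * u z = (\sum_y u y) ^+ 2.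
  by rewrite expr2 mulr_suml; apply: eq_bigr => y _; rewrite mulr_sumr.
have : \sum_y \sum_z (u y - u z) ^+ 2 =
   (#|X|%:R * \sum_y u y ^+ 2 - (\sum_y u y) ^+ 2) *+ 2.
  under eq_bigr do under eq_bigr do rewrite sqrrB.
  under eq_bigr do rewrite big_split sumrB sumrMnl.
  rewrite big_split sumrB sumrMnl e1 e2 e3.
  set a := (#|X|%:R * _); set b := ((\sum_y u y) ^+ 2).
  change (a - b *+ 2 + a = (a - b) *+ 2).
  by rewrite mulrnBl addrAC -mulr2n.
move=> eD; move: D0; rewrite eD pmulrn_lge0 // subr_ge0 //.
Qed.

Lemma sq_le (X : finType) (u : X -> algC) : (forall y, 0 <= u y) ->
  \sum_y u y ^+ 2 <= (\sum_y u y) ^+ 2.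
Proof.
move=> u0; rewrite [X in _ <= X]expr2 mulr_suml; apply: ler_sum => y _.
rewrite expr2 ler_wpM2l //.
by rewrite (bigD1 y) //= lerDl sumr_ge0.
Qed.

Lemma exists_avg (X : finType) (a : X -> algC) (S : algC) :
  (0 < #|X|)%N -> (forall r, 0 <= a r) -> S = \sum_r a r ->
  (exists r, #|X|%:R * a r <= S) /\ (exists s, S <= #|X|%:R * a s).
Proof.
move=> X0 a0 eS.
have Sr : S \is Num.real by rewrite eS; apply: ger0_real; apply: sumr_ge0.
have ar r : #|X|%:R * a r \is Num.real by apply: ger0_real; rewrite mulr_ge0.
have [x0 _] := card_gt0P X0.
have hasX : has (fun _ : X => true) (index_enum X).
  by apply/hasP; exists x0; rewrite ?mem_index_enum.
split.
  case: (boolP [exists r, #|X|%:R * a r <= S]) => [/existsP [r Hr]|H]; first by exists r.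
  have lt r : S < #|X|%:R * a r.
    rewrite real_ltNge //; apply/negP => Hr; move/negP: H; apply.
    by apply/existsP; exists r.
  have := ltr_sum hasX (fun r _ => lt r).
  by rewrite -mulr_sumr -eS sum_const_X ltxx.
case: (boolP [exists r, S <= #|X|%:R * a r]) => [/existsP [r Hr]|H]; first by exists r.
have lt r : #|X|%:R * a r < S.
  rewrite real_ltNge //; apply/negP => Hr; move/negP: H; apply.
  by apply/existsP; exists r.
have := ltr_sum hasX (fun r _ => lt r).
by rewrite -mulr_sumr -eS sum_const_X ltxx.
Qed.

Lemma final_ineq (X : finType) (f : X -> X -> algC) (S : algC) :
  (0 < #|X|)%N -> S = \sum_r \sum_y `|f r y| ^+ 2 ->
  (exists r, (2^-1 * \sum_y `|f r y|) ^+ 2 <= 4^-1 * S) /\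
  (exists s, (4 * #|X|%:R)^-1 * S <= (2^-1 * \sum_y `|f s y|) ^+ 2).
Proof.
move=> X0 eS.
have h4 : (2^-1 : algC) ^+ 2 = 4^-1 by rewrite exprVn expr2 -natrM.
have nX : (#|X|%:R : algC) != 0 by rewrite pnatr_eq0 -lt0n.
have [[r Hr] [s Hs]] := @exists_avg X _ _ X0 (fun r => sumr_ge0 _ (fun y _ => exprn_ge0 2 (normr_ge0 (f r y)))) eS.
split.
  exists r; rewrite exprMn h4 ler_wpM2l ?invr_ge0 ?ler0n //.
  apply: le_trans Hr; apply: cs_ineq => y; exact: normr_ge0.
exists s; rewrite exprMn h4.
apply: (@le_trans _ _ ((4 * #|X|%:R)^-1 * (#|X|%:R * \sum_y `|f s y| ^+ 2))).
  by rewrite ler_wpM2l ?invr_ge0 ?mulr_ge0 ?ler0n.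
rewrite invfM -mulrA mulKf // ler_wpM2l ?invr_ge0 ?ler0n //.
apply: sq_le => y; exact: normr_ge0.
Qed.

Lemma mult_char (gT : finGroupType) (k : nat) (d : 'I_k -> nat)
  (rho : forall j : 'I_k, mx_representation algC [set: gT]%G (d j))
  (rho_noniso : forall i j, mx_rsim (rho i) (rho j) -> i = j)
  (rho_all : forall n (r : mx_representation algC [set: gT]%G n),
      mx_irreducible r -> exists j, mx_rsim r (rho j))
  m (rW : mx_representation algC [set: gT]%G m) (x : gT) :
  \sum_(j < k) (mult (rho j) rW)%:R * \tr (rho j x) = \tr (rW x).
Proof.
have trE n (r : mx_representation algC [set: gT]%G n) : \tr (r x) = cfRepr r x.
  by rewrite cfunE inE mulr1n.
rewrite trE socle_cfRepr sum_cfunE.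
rewrite /mult.
under eq_bigr do rewrite natr_sum mulr_suml.
rewrite exchange_big /=; apply: eq_bigr => W _.
have [j rj] := rho_all _ _ (socle_irr W).
rewrite (bigD1 j) //= big1 ?addr0.
  destruct (excluded_middle_informative _) as [ri0|nr]; last by case: nr.
  by rewrite /= -scaler_nat cfunE (cfRepr_sim rj) -trE.
move=> i ij; destruct (excluded_middle_informative _) as [ri|]; last by rewrite mul0r.
by case/eqP: ij; apply: rho_noniso; apply: mx_rsim_trans (mx_rsim_sym ri) rj.
Qed.

Lemma dev_sum (X : finType) (P : X -> algC) (c : algC) :
  c = #|X|%:R^-1 -> (0 < #|X|)%N -> \sum_y P y = 1 ->
  \sum_y `|P y - c| ^+ 2 = \sum_y P y * (P y)^* - c.
Proof.
move=> ec X0 sP.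
have nX : (#|X|%:R : algC) != 0 by rewrite pnatr_eq0 -lt0n.
have cc : c^* = c by rewrite ec rmorphV ?unitfE //= conjC_nat.
have e y : `|P y - c| ^+ 2 = P y * (P y)^* - (c * (P y)^* + c * P y) + c * c.
  by rewrite normCK rmorphB /= cc; ring.
under eq_bigr do rewrite e.
rewrite big_split sumrB big_split /= -!mulr_sumr -rmorph_sum sP /= rmorph1.
have hc : #|X|%:R * c = 1 by rewrite ec mulfV.
rewrite sum_const_X hc; ring.
Qed.

Lemma ga_act_sum (gT : finGroupType) (X : finType) (A : lact gT X) R r :
  \sum_g R g = 1 -> \sum_y ga_act A R (cx_basis r) y = 1.
Proof.
move=> sR; under eq_bigr do rewrite ga_act_basis.
rewrite exchange_big /= -[RHS]sR; apply: eq_bigr => g _.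
rewrite (bigD1 (A g r)) //= eqxx mulr1 big1 ?addr0 //.
by move=> y /negbTE; rewrite eq_sym => ->; rewrite mulr0.
Qed.

Theorem corollary1p2 (gT : finGroupType) (k : nat) (d : 'I_k -> nat)
  (rho : forall j : 'I_k, mx_representation algC [set: gT]%G (d j))
  (rho_unitary : forall j, unitary_repr (rho j))
  (rho_irr : forall j, mx_irreducible (rho j))
  (rho_noniso : forall i j, mx_rsim (rho i) (rho j) -> i = j)
  (rho_all : forall n (r : mx_representation algC [set: gT]%G n),
      mx_irreducible r -> exists j, mx_rsim r (rho j))
  (X : finType) (X_nonempty : (0 < #|X|)%N) (A : lact gT X) (A_trans : lact_transitive A)
  (Q : gT -> algC) (Q_ge0 : forall g, 0 <= Q g) (Q_sum1 : \sum_(g : gT) Q g = 1)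
  (N : nat) (N_pos : (0 < N)%N) :
  let S := \sum_(j < k | ~~ is_triv (rho j))
             (mult (rho j) (perm_repr A))%:R * frob2 (fourier Q (rho j) ^+ N) in
  (exists r : X,
     tv_norm (cx_sub (ga_act A (ga_pow Q N) (cx_basis r)) (@cx_unif X)) ^+ 2
       <= 4^-1 * S)
  /\
  (exists s : X,
     tv_norm (cx_sub (ga_act A (ga_pow Q N) (cx_basis s)) (@cx_unif X)) ^+ 2
       >= (4 * #|X|%:R)^-1 * S).
Proof.
move=> S.
set R := ga_pow Q N.
have sR : \sum_g R g = 1 by apply: ga_pow_sum.
pose m j : algC := (mult (rho j) (perm_repr A))%:R.
have chi_perm x : \sum_j m j * \tr (rho j x) = \sum_(y : X) (A x y == y)%:R.
  by rewrite (@mult_char gT k d rho rho_noniso rho_all) perm_tr.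
have frobj j : frob2 (fourier Q (rho j) ^+ N) =
    \sum_g \sum_h R g * (R h)^* * \tr (rho j (h^-1 * g)%g).
  by rewrite fourier_pow frob_formula.
have trivtr j : is_triv (rho j) -> forall g, \tr (rho j g) = 1.
  move=> /is_trivP rs g.
  have := congr1 (fun phi : 'CF([set: gT]) => phi g) (cfRepr_sim rs).
  by rewrite cfRepr_triv cfun1E !cfunE inE !mulr1n.
have frob_triv j : is_triv (rho j) -> frob2 (fourier Q (rho j) ^+ N) = 1.
  move=> tj; rewrite frobj.
  under eq_bigr do under eq_bigr do rewrite trivtr // mulr1.
  rewrite -[RHS](mulr1 1) -{1}sR -(rmorph1 (@Num.conj_op _)) -sR rmorph_sum mulr_suml.
  by apply: eq_bigr => g _; rewrite mulr_sumr.
have mtriv : \sum_(j < k | is_triv (rho j)) m j = 1.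
  have e := @burnside gT X A X_nonempty A_trans.
  have e2 : \sum_(x : gT) \sum_(y : X) ((A x y == y)%:R : algC) =
      \sum_(j < k | is_triv (rho j)) m j * #|gT|%:R.
    under eq_bigr do rewrite -chi_perm.
    rewrite exchange_big /=.
    under eq_bigr do rewrite -mulr_sumr sum_tr_irr //.
    rewrite [LHS](bigID (fun j => is_triv (rho j))) /= [X in _ + X]big1 ?addr0.
      by apply: eq_bigr => j tj; rewrite tj.
    by move=> j /negbTE ->; rewrite mulr0.
  have nG : (#|gT|%:R : algC) != 0.
    by rewrite pnatr_eq0 -lt0n; apply/card_gt0P; exists 1%g.
  apply: (mulIf nG); rewrite mulr_suml -e2 e mul1r //.
have all : \sum_j m j * frob2 (fourier Q (rho j) ^+ N) =
    \sum_r \sum_y ga_act A R (cx_basis r) y * (ga_act A R (cx_basis r) y)^*.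
  rewrite sum_sq_P.
  under eq_bigr do rewrite frobj mulr_sumr.
  rewrite exchange_big /=; apply: eq_bigr => g _.
  under eq_bigr do rewrite mulr_sumr.
  rewrite exchange_big /=; apply: eq_bigr => h _.
  rewrite -chi_perm mulr_sumr; apply: eq_bigr => j _.
  by rewrite mulrCA.
have eS : S = \sum_r \sum_y `|cx_sub (ga_act A R (cx_basis r)) (@cx_unif X) y| ^+ 2.
  have : \sum_j m j * frob2 (fourier Q (rho j) ^+ N) = 1 + S.
    rewrite (bigID (fun j => is_triv (rho j))) /=; congr (_ + _).
    by rewrite -mtriv; apply: eq_bigr => j tj; rewrite frob_triv // mulr1.
  rewrite all => eall.
  have -> : S = \sum_r \sum_y ga_act A R (cx_basis r) y * (ga_act A R (cx_basis r) y)^* - 1.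

    by rewrite eall [1 + S]addrC addrK.
  rewrite /cx_sub /cx_unif.
  under [RHS]eq_bigr => r _ do rewrite (@dev_sum X (ga_act A R (cx_basis r)) _ erefl X_nonempty (@ga_act_sum gT X A R r sR)).
  rewrite sumrB sum_const_X mulfV // pnatr_eq0 -lt0n //.
exact: (@final_ineq X _ _ X_nonempty eS).
Qed.
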